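(* Let $r=r(n)$ be integers with $r\ge 2$ and $r=o(n^{1/2})$. Then $$\Pr(\mathcal A_3)=\frac{1-o(1)}{1+\frac{(r-1)^3}{n}(1+o(1))}\qquad(n\to\infty).$$ In particular, if $r/n^{1/3}\to c\in[0,\infty)$ then $\Pr(\mathcal A_3)\to 1/(1+c^3)$.
   Context: Random intersecting process: Let $[n]=\{1,\dots,n\}$ and $\binom{[n]}{r}$ the family of $r$-subsets of $[n]$. Choose $e_1$ uniformly at random from $\binom{[n]}{r}$. Given $\mathcal F_i=\{e_1,\dots,e_i\}$, let $\mathcal A(\mathcal F_i)=\{e\in\binom{[n]}{r}: e\notin\mathcal F_i,\ e\cap e_j\neq\emptyset \text{ for all } 1\le j\le i\}$, and choose $e_{i+1}$ uniformly at random from $\mathcal A(\mathcal F_i)$. The process halts when $\mathcal A(\mathcal F_i)=\emptyset$. A star is a collection of sets such that every pair of them has the same one-element intersection $\{x\}$ ($x$ is the kernel); a single set is a $1$-star by convention. For $i\ge1$, $\mathcal A_i$ is the event that at least $i$ edges are chosen and $\mathcal F_i$ is an $i$-star. *)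

(* Defs.v *)
From Stdlib Require Import Reals.
From mathcomp Require Import all_boot.

Set Implicit Arguments.
Unset Strict Implicit.
Unset Printing Implicit Defensive.

Definition rsum (T : finType) (P : pred T) (f : T -> R) : R :=
  foldr (fun x acc => Rplus (f x) acc) R0 (enum P).

Definition edge (n r : nat) (e : {set 'I_n}) : bool := #|e| == r.

Definition admissible (n r : nat) (F : seq {set 'I_n}) : pred {set 'I_n} :=
  fun e => [&& edge r e, e \notin F & all (fun f : {set 'I_n} => ~~ [disjoint e & f]) F].

Definition card_adm (n r : nat) (F : seq {set 'I_n}) : nat :=
  #|[pred e | admissible r F e]|.

Definition is_star (n : nat) (F : seq {set 'I_n}) : bool :=
  [exists x : 'I_n, all (fun e => all (fun f => (e == f) || (e :&: f == [set x])) F) F].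

(* Pr(A_3): probability that the random intersecting process chooses at
   least 3 edges and F_3 = {e1,e2,e3} is a 3-star.  e1 uniform among all
   r-sets, e2 uniform in A(F_1), e3 uniform in A(F_2). *)
Definition probA3 (n r : nat) : R :=
  rsum (fun e1 : {set 'I_n} => edge r e1) (fun e1 =>
   rsum (admissible r [:: e1]) (fun e2 =>
    rsum (fun e3 => admissible r [:: e1; e2] e3 && is_star [:: e1; e2; e3])
      (fun e3 =>
        Rmult (Rmult (Rinv (INR #|[pred e : {set 'I_n} | edge r e]|))
                     (Rinv (INR (card_adm r [:: e1]))))
              (Rinv (INR (card_adm r [:: e1; e2])))))).

(* Main.v *)
Require Import Defs.
From Stdlib Require Import Reals.
From Stdlib Require Import Lra.
From mathcomp Require Import all_boot.
From mathcomp Require Import zify.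
Set Implicit Arguments. Unset Strict Implicit.

Lemma inj_le (T1 T2 : finType) (P1 : {pred T1}) (P2 : {pred T2}) (f : T1 -> T2) :
  {in P1 &, injective f} -> (forall y, y \in P1 -> f y \in P2) -> #|P1| <= #|P2|.
Proof.
move=> inj h.
have -> : #|P1| = #|[set y | y \in P1]| by apply: eq_card => y; rewrite inE.
rewrite -(card_in_imset (f := f)); last by move=> a b; rewrite !inE; apply: inj.
apply: subset_leq_card.
by apply/subsetP=> _ /imsetP[y yD ->]; apply: h; rewrite inE in yD.
Qed.

Lemma surj_le (T1 T2 : finType) (D : {set T1}) (P : {pred T2}) (f : T1 -> T2) :
  (forall z, z \in P -> exists2 y, y \in D & z = f y) -> #|P| <= #|D|.
Proof.
move=> h; apply: leq_trans (leq_imset_card f D); apply: subset_leq_card.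
by apply/subsetP=> z Pz; case: (h z Pz) => y yD ->; apply: imset_f.
Qed.

Lemma split_le (T : finType) (P Q : pred T) a b :
  #|[pred z | P z && Q z]| <= a -> #|[pred z | P z && ~~ Q z]| <= b -> #|P| <= a + b.
Proof.
move=> ha hb; rewrite -(cardID Q P).
apply: leq_add.
  by apply: leq_trans ha; apply: subset_leq_card; apply/subsetP=> z; rewrite !inE /= andbC.
by apply: leq_trans hb; apply: subset_leq_card; apply/subsetP=> z; rewrite !inE /= andbC.
Qed.

Section Comb.
Variable n : nat.
Implicit Types (e f Q : {set 'I_n}) (B : {set 'I_n}).

Definition Dr B k := [set A : {set 'I_n} | A \subset B & #|A| == k].
Lemma card_Dr B k : #|Dr B k| = 'C(#|B|, k).
Proof. exact: cards_draws. Qed.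
Lemma card_DrT k : #|Dr setT k| = 'C(n, k).
Proof. by rewrite card_Dr cardsT card_ord. Qed.

Lemma decomp2 e a b : a \in e -> b \in e -> a != b ->
  e = a |: (b |: (e :\ a :\ b)) /\ #|e :\ a :\ b| = #|e| - 2.
Proof.
move=> ae be ab; have be' : b \in e :\ a by rewrite !inE eq_sym ab.
split; first by rewrite setD1K // setD1K.
by rewrite (cardsD1 a e) (cardsD1 b (e :\ a)) ae be' add1n add1n subn2.
Qed.

Lemma card_U1 (a : 'I_n) (Q : {set 'I_n}) : a \notin Q -> #|a |: Q| = #|Q|.+1.
Proof. by move=> h; rewrite cardsU1 h. Qed.

Lemma setI1_neq r (e f : {set 'I_n}) x : (2 <= r)%N -> #|f| = r -> e :&: f = [set x] -> e != f.
Proof.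
move=> r2 fr h; apply/eqP=> ef; move: h; rewrite ef setIid => fx.
by move: fr; rewrite fx cards1 => r1; move: r2; rewrite -r1.
Qed.

Lemma star_iff r (e1 e2 e3 : {set 'I_n}) x : (2 <= r)%N -> #|e1| = r -> #|e2| = r ->
  e1 :&: e2 = [set x] ->
  (admissible r [:: e1; e2] e3 && is_star [:: e1; e2; e3]) =
  [&& #|e3| == r, e3 :&: e1 == [set x] & e3 :&: e2 == [set x]].
Proof.
move=> r2 c1 c2 i12.
have e12 : e1 != e2 by apply: (setI1_neq r2 c2 i12).
rewrite /admissible /is_star /edge /=.
apply/idP/idP.
- case/andP=> /and5P[er nin _ _ _] /existsP[y].
  rewrite !andbT !eqxx /= => /and3P[/andP[h12 h13] /andP[_ h23] _].
  move: nin; rewrite !inE negb_or => /andP[n1 n2].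
  move: h12; rewrite (negbTE e12) /= i12 => /eqP y1.
  move: h13; rewrite eq_sym (negbTE n1) /= => /eqP h13.
  move: h23; rewrite eq_sym (negbTE n2) /= => /eqP h23.
  by rewrite er /= setIC h13 setIC h23 y1 eqxx.
- case/and3P=> er /eqP h31 /eqP h32.
  have n1 : e3 != e1 by apply: (setI1_neq r2 c1 h31).
  have n2 : e3 != e2 by apply: (setI1_neq r2 c2 h32).
  rewrite er !inE negb_or n1 n2 /=.
  have s0 : ([set x] == set0) = false by apply/eqP => /setP/(_ x); rewrite !inE eqxx.
  rewrite -!setI_eq0 h31 h32 s0 /=.
  apply/existsP; exists x.
  rewrite !eqxx !(eq_sym _ e3) (eq_sym e2 e1) (negbTE n1) (negbTE n2) (negbTE e12) /=.
  by rewrite i12 (setIC e1 e3) h31 (setIC e2 e1) i12 (setIC e2 e3) h32 !eqxx.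
Qed.

Lemma set1_neq0 (z : 'I_n) : ([set z] == set0) = false.
Proof. by apply/eqP => /setP/(_ z); rewrite !inE eqxx. Qed.

Lemma U1I_set1 (a : 'I_n) Q e : a \in e -> (forall z, z \in Q -> z \notin e) ->
  (a |: Q) :&: e = [set a].
Proof.
move=> ae hQ; apply/setP=> z; rewrite !inE.
case: (z =P a) => [->|_] //=.
by case zQ: (z \in Q) => //=; apply/negbTE/hQ.
Qed.

Lemma U2I_set1 (a b : 'I_n) Q e : a \in e -> b \notin e -> (forall z, z \in Q -> z \notin e) ->
  (a |: (b |: Q)) :&: e = [set a].
Proof.
move=> ae be hQ; apply: U1I_set1 => // z; rewrite !inE => /orP[/eqP->|] //; exact: hQ.
Qed.

Lemma cardC' B : #|~: B| = n - #|B|.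
Proof. by move: (cardsC B); rewrite card_ord; move: #|~: B| #|B| => a b h; rewrite -h addKn. Qed.

Section Star.
Variables (r : nat) (e1 e2 : {set 'I_n}) (x : 'I_n).
Hypotheses (r2 : (2 <= r)%N) (c1 : #|e1| = r) (c2 : #|e2| = r) (i12 : e1 :&: e2 = [set x]).

Definition starP := [pred e : {set 'I_n} | [&& #|e| == r, e :&: e1 == [set x] & e :&: e2 == [set x]]].

Lemma cardU12 : #|e1 :|: e2| = (2 * r).-1.
Proof.
have := cardsUI e1 e2; rewrite i12 cards1 c1 c2 => h.
by rewrite mul2n -addnn -h addn1.
Qed.

Lemma x1 : x \in e1. Proof. have : x \in e1 :&: e2 by rewrite i12 set11. by rewrite inE => /andP[]. Qed.
Lemma x2 : x \in e2. Proof. have : x \in e1 :&: e2 by rewrite i12 set11. by rewrite inE => /andP[]. Qed.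

Lemma notin12 Q z : Q \subset ~: (e1 :|: e2) -> z \in Q -> z \notin e1 /\ z \notin e2.
Proof. by move=> /subsetP h /h; rewrite !inE negb_or => /andP. Qed.

Lemma S_low : 'C(n - (2 * r).-1, r.-1) <= #|starP|.
Proof.
rewrite -cardU12 -cardC' -card_Dr.
apply: (@inj_le _ _ _ _ (fun Q => x |: Q)).
  move=> Q1 Q2; rewrite !inE => /andP[s1 _] /andP[s2 _] h.
  have xn1 : x \notin Q1 by apply/negP=> /(notin12 s1)[]; rewrite x1.
  have xn2 : x \notin Q2 by apply/negP=> /(notin12 s2)[]; rewrite x1.
  by rewrite -(setU1K xn1) h setU1K.
move=> Q; rewrite !inE => /andP[s /eqP cQ].
have xn : x \notin Q by apply/negP=> /(notin12 s)[]; rewrite x1.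
rewrite card_U1 // cQ prednK ?(leq_trans _ r2) // eqxx /=.
rewrite !U1I_set1 ?eqxx ?x1 ?x2 // => z /(notin12 s)[] //.
Qed.

Lemma S_up : #|starP| <= 'C(n.-1, r.-1).
Proof.
rewrite -[n in 'C(n.-1, _)]card_ord -(cardsC1 x) -card_Dr.
apply: (@inj_le _ _ _ _ (fun e => e :\ x)).
  move=> f1 f2; rewrite !inE => /and3P[_ /eqP h1 _] /and3P[_ /eqP h2 _] h.
  have xf1 : x \in f1.
    have : x \in f1 :&: e1 by rewrite h1 set11.
    by rewrite inE => /andP[].
  have xf2 : x \in f2.
    have : x \in f2 :&: e1 by rewrite h2 set11.
    by rewrite inE => /andP[].
  by rewrite -(setD1K xf1) h setD1K.
move=> f; rewrite !inE => /and3P[/eqP cf /eqP h1 _].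
have xf : x \in f.
  have : x \in f :&: e1 by rewrite h1 set11.
  by rewrite inE => /andP[].
apply/andP; split.
  by apply/subsetP=> z; rewrite !inE => /andP[].
by rewrite (cardsD1 x f) xf in cf; rewrite -cf.
Qed.

Lemma e1x_card : #|e1 :\ x| = r.-1.
Proof. by have := c1; rewrite (cardsD1 x e1) x1 => <-. Qed.
Lemma e2x_card : #|e2 :\ x| = r.-1.
Proof. by have := c2; rewrite (cardsD1 x e2) x2 => <-. Qed.

Lemma in12 z : z \in e1 -> z \in e2 -> z = x.
Proof. move=> h1 h2; have : z \in e1 :&: e2 by rewrite inE h1. by rewrite i12 inE => /eqP. Qed.

Lemma meet_ex e f : ~~ [disjoint e & f] -> exists2 z, z \in e & z \in f.
Proof.
rewrite -setI_eq0 => /set0Pn[z]; rewrite inE => /andP[]; by exists z.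
Qed.

Lemma starP_adm e : starP e -> admissible r [:: e1; e2] e && is_star [:: e1; e2; e].
Proof. by rewrite (star_iff _ r2 c1 c2 i12). Qed.

Definition f3 (p : ('I_n * 'I_n) * {set 'I_n}) := p.1.1 |: (p.1.2 |: p.2).

Lemma A2_split : #|[pred e | admissible r [:: e1; e2] e]| =
   #|starP| + #|[predD [pred e | admissible r [:: e1; e2] e] & starP]|.
Proof.
rewrite -(cardID starP [pred e | admissible r [:: e1; e2] e]); congr (_ + _).
apply: eq_card => e; rewrite !inE /=.
apply/idP/idP => [/andP[_ ->] // | h].
by have /andP[-> _] := starP_adm h.
Qed.

Lemma T2_low : (r.-1 * r.-1) * 'C(n - (2 * r).-1, r - 2) <=
   #|[predD [pred e | admissible r [:: e1; e2] e] & starP]|.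
Proof.
rewrite -cardU12 -cardC' -card_Dr -{1}e1x_card -e2x_card -!cardsX.
have key : forall p, p \in setX (setX (e1 :\ x) (e2 :\ x)) (Dr (~: (e1 :|: e2)) (r - 2)) ->
  [/\ f3 p :&: e1 = [set p.1.1], f3 p :&: e2 = [set p.1.2], x \notin f3 p,
      f3 p :\ p.1.1 :\ p.1.2 = p.2 & #|f3 p| = r].
  case=> [[a b] Q]; rewrite !inE /= => /andP[/andP[/andP[ax ae] /andP[bx be]] /andP[sQ /eqP cQ]].
  have Qn : forall z, z \in Q -> z \notin e1 /\ z \notin e2 by move=> z; apply: notin12.
  have be1 : b \notin e1 by apply/negP=> /in12 /(_ be) /eqP; rewrite (negbTE bx).
  have ae2 : a \notin e2 by apply/negP=> /in12-/(_ ae) /eqP; rewrite (negbTE ax).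
  have ab : a != b by apply/eqP=> eab; move: be1; rewrite -eab ae.
  have aQ : a \notin Q by apply/negP=> /Qn[]; rewrite ae.
  have bQ : b \notin Q by apply/negP=> /Qn[_]; rewrite be.
  have abQ : a \notin b |: Q by rewrite !inE negb_or ab aQ.
  rewrite /f3 /=; split.
  - by apply: U2I_set1 => // z /Qn[].
  - by rewrite setUCA; apply: U2I_set1 => // z /Qn[].
  - rewrite !negb_or (eq_sym x a) (eq_sym x b) ax bx /=.
    by apply/negP=> /Qn[]; rewrite x1.
  - by rewrite setU1K // setU1K.
  - by rewrite card_U1 // card_U1 // cQ; case: (r) r2 => [|[|rr]] // _; rewrite subn2.
refine (@inj_le _ _ _ _ f3 _ _).
  move=> p q /key[p1 p2 _ p3 _] /key[q1 q2 _ q3 _] e.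
  have ha : p.1.1 = q.1.1 by apply: set1_inj; rewrite -p1 -q1 e.
  have hb : p.1.2 = q.1.2 by apply: set1_inj; rewrite -p2 -q2 e.
  have hQ : p.2 = q.2 by rewrite -p3 -q3 e ha hb.
  by move: ha hb hQ; case: p {p1 p2 p3 e} => [[? ?] ?]; case: q {q1 q2 q3} => [[? ?] ?] /= -> -> ->.
move=> p pD; have [h1 h2 hx _ hc] := key p pD.
have ax : p.1.1 != x.
  by move: pD; case: p {h1 h2 hx hc} => [[a b] Q]; rewrite !inE /= => /andP[/andP[/andP[]]].
have ne1 : f3 p != e1 by apply/eqP=> h; move: hx; rewrite h x1.
have ne2 : f3 p != e2 by apply/eqP=> h; move: hx; rewrite h x2.
rewrite !inE /= h1 (inj_eq set1_inj) (negbTE ax) andbF /=.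
rewrite /admissible /edge /= hc eqxx /= !inE negb_or ne1 ne2 /= -!setI_eq0 h1 h2.
by rewrite !set1_neq0.
Qed.

Lemma other_elt (S : {set 'I_n}) : x \in S -> S != [set x] -> exists2 y, y \in S & y != x.
Proof.
move=> xS nS; have [y yS] : exists y, y \in S :\ x.
  apply/set0Pn; apply/negP=> /eqP h; move: nS; by rewrite -(setD1K xS) h setU0 eqxx.
by move: yS; rewrite !inE => /andP[h1 h2]; exists y.
Qed.

Lemma X_up : #|[predD [pred e | admissible r [:: e1; e2] e] & starP]| <=
  (2 * r).-1 * 'C(n, r - 2) + (r.-1 * r.-1) * 'C(n, r - 2).
Proof.
apply: (@split_le _ _ (fun e => x \in e)).
- rewrite -cardU12 -card_DrT -cardsX.
  apply: (@surj_le _ _ _ _ (fun p => x |: (p.1 |: p.2))).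
  move=> e; rewrite !inE /= => /andP[/andP[ns /and5P[/eqP ce _ _ _ _]] xe].
  rewrite ce eqxx /= in ns.
  have [y ye yx] : exists2 y, y \in e & (y != x) && (y \in e1 :|: e2).
    case h1: (e :&: e1 == [set x]) ns => /= ns.
      have xe2 : x \in e :&: e2 by rewrite inE xe x2.
      have [y] := other_elt xe2 ns.
      by rewrite inE => /andP[ye ye2] yx; exists y; rewrite // yx inE ye2 orbT.
    have xe1 : x \in e :&: e1 by rewrite inE xe x1.
    have [y] := other_elt xe1 (negbT h1).
    by rewrite inE => /andP[ye ye1] yx; exists y; rewrite // yx inE ye1.
  case/andP: yx => yx y12.
  have xy : x != y by rewrite eq_sym.
  have [de cd] := decomp2 xe ye xy.
  exists (y, e :\ x :\ y) => //=.
  by rewrite in_setX y12 /= inE subsetT cd ce eqxx.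
- rewrite -card_DrT -{1}e1x_card -e2x_card -!cardsX.
  apply: (@surj_le _ _ _ _ f3).
  move=> e; rewrite !inE /= => /andP[/andP[ns /and5P[/eqP ce _ m1 m2 _]] xe].
  have [a ae ae1] := meet_ex m1.
  have [b be be2] := meet_ex m2.
  have ax : a != x by apply/eqP=> h; move: xe; rewrite -h ae.
  have bx : b != x by apply/eqP=> h; move: xe; rewrite -h be.
  have ab : a != b by apply/eqP=> h; move: ax; rewrite (in12 ae1) ?eqxx // h.
  have [de cd] := decomp2 ae be ab.
  exists ((a, b), e :\ a :\ b) => //.
  by rewrite !in_setX /= !inE ax ae1 bx be2 subsetT cd ce eqxx.
Qed.
End Star.

Section K.
Variables (r : nat) (e1 : {set 'I_n}).
Hypotheses (r2 : (2 <= r)%N) (c1 : #|e1| = r).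

Definition E1P := [pred e : {set 'I_n} | admissible r [:: e1] e && (#|e1 :&: e| == 1)].

Lemma K_low : r * 'C(n - r, r.-1) <= #|E1P|.
Proof.
rewrite -{1 2}c1 -cardC' -card_Dr -cardsX.
have key : forall p, p \in setX e1 (Dr (~: e1) r.-1) ->
    [/\ (p.1 |: p.2) :&: e1 = [set p.1], (p.1 |: p.2) :\ p.1 = p.2 & #|p.1 |: p.2| = r].
  case=> [a Q]; rewrite !inE /= => /andP[ae /andP[sQ /eqP cQ]].
  have Qn : forall z, z \in Q -> z \notin e1 by move=> z /(subsetP sQ); rewrite inE.
  have aQ : a \notin Q by apply/negP=> /Qn; rewrite ae.
  split; first by apply: U1I_set1.
    by rewrite setU1K.
  by rewrite card_U1 // cQ prednK // (leq_trans _ r2).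
apply: (@inj_le _ _ _ _ (fun p => p.1 |: p.2)).
  move=> p q /key[p1 p2 _] /key[q1 q2 _] e.
  have ha : p.1 = q.1 by apply: set1_inj; rewrite -p1 -q1 e.
  have hQ : p.2 = q.2 by rewrite -p2 -q2 e ha.
  by move: ha hQ; case: p {p1 p2 e} => [? ?]; case: q {q1 q2} => [? ?] /= -> ->.
move=> p /key[h1 _ hc]; rewrite !inE /= /admissible /edge /= hc eqxx /=.
rewrite !inE -setI_eq0 h1 set1_neq0 setIC h1 cards1 eqxx !andbT.
by apply: (setI1_neq r2 c1 h1).
Qed.

Lemma K_up : #|[pred e : {set 'I_n} | admissible r [:: e1] e]| <= #|E1P| + (r * r) * 'C(n, r - 2).
Proof.
apply: (@split_le _ _ (fun e => #|e1 :&: e| == 1)).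
  by apply: subset_leq_card; apply/subsetP=> z; rewrite !inE.
rewrite -card_DrT; have -> : r * r = #|e1| * #|e1| by rewrite c1.
rewrite -!cardsX.
apply: (@surj_le _ _ _ _ f3).
move=> e; rewrite !inE /= => /andP[/and3P[/eqP ce _ /andP[m _]] n1].
have : 1 < #|e1 :&: e|.
  rewrite ltn_neqAle eq_sym n1 /= card_gt0 setIC setI_eq0 //.
case/card_gt1P=> a [b [ha hb ab]].
move: ha hb; rewrite !inE => /andP[ae1 ae] /andP[be1 be].
have [de cd] := decomp2 ae be ab.
exists ((a, b), e :\ a :\ b) => //.
by rewrite !in_setX /= ae1 be1 inE subsetT cd ce eqxx.
Qed.
End K.

Lemma star_zero r (e1 e2 e3 : {set 'I_n}) : admissible r [:: e1] e2 -> #|e1 :&: e2| != 1 ->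
  (admissible r [:: e1; e2] e3 && is_star [:: e1; e2; e3]) = false.
Proof.
move=> /and3P[_ ne _] nc; apply/negP=> /andP[_ /existsP[y]] /=.
rewrite !andbT => /and3P[/and3P[_ h _] _ _].
move: ne; rewrite !inE eq_sym => ne; move: h; rewrite (negbTE ne) /= => /eqP h.
by move: nc; rewrite h cards1.
Qed.
End Comb.
Open Scope R_scope.

Definition sumS (T : Type) (s : seq T) (f : T -> R) := foldr (fun x acc => f x + acc) 0 s.

Lemma rsum_sumS (T : finType) (P : pred T) f :
  rsum P f = sumS (Finite.enum T) (fun x => if P x then f x else 0).
Proof.
rewrite /rsum /enum_mem /sumS; elim: (Finite.enum T) => //= x s IH.
have -> : (x \in P) = P x by [].
by case: (P x) => /=; rewrite IH // Rplus_0_l.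
Qed.

Lemma sumS_eq (T : Type) (s : seq T) f g : (forall x, f x = g x) -> sumS s f = sumS s g.
Proof. by move=> h; elim: s => //= x s ->; rewrite h. Qed.

Lemma sumS_le (T : Type) (s : seq T) f g : (forall x, f x <= g x) -> sumS s f <= sumS s g.
Proof. move=> h; elim: s => /= [|x s IH]; [lra | have := h x; lra]. Qed.

Lemma sumS_ind (T : Type) (s : seq T) (P : pred T) c :
  sumS s (fun x => if P x then c else 0) = INR (count P s) * c.
Proof.
elim: s => /= [|x s ->]; first lra.
case: (P x); rewrite ?add0n ?plus_INR /=; lra.
Qed.

Lemma card_count (T : finType) (P : pred T) : #|P| = count P (Finite.enum T).
Proof. by rewrite cardE /enum_mem size_filter. Qed.

Lemma rsum_le (T : finType) (P : pred T) f g : (forall x, P x -> f x <= g x) -> rsum P f <= rsum P g.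
Proof.
move=> h; rewrite !rsum_sumS; apply: sumS_le => x; case Px: (P x); [exact: h | lra].
Qed.

Lemma rsum_ind (T : finType) (P Q : pred T) c :
  rsum P (fun x => if Q x then c else 0) = INR #|[pred x | P x && Q x]| * c.
Proof.
rewrite rsum_sumS card_count -sumS_ind /=.
by apply: sumS_eq => x; case: (P x).
Qed.

Lemma rsum_const (T : finType) (P : pred T) c : rsum P (fun _ => c) = INR #|P| * c.
Proof.
by rewrite rsum_sumS card_count -sumS_ind.
Qed.

Definition ScR n r (e1 e2 : {set 'I_n}) :=
  #|(fun e3 : {set 'I_n} => admissible r [:: e1; e2] e3 && is_star [:: e1; e2; e3]) : pred _|.

Lemma inner_e2 n r (e1 e2 : {set 'I_n}) c : admissible r [:: e1] e2 ->
  rsum (fun e3 : {set 'I_n} => admissible r [:: e1; e2] e3 && is_star [:: e1; e2; e3]) (fun _ => c)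
  = if #|e1 :&: e2| == 1%N then INR (ScR r e1 e2) * c else 0.
Proof.
move=> ad; rewrite rsum_const; case: ifP => // h.
rewrite (@eq_card0 _ (fun e3 : {set 'I_n} => admissible r [:: e1; e2] e3 && is_star [:: e1; e2; e3])).
  by rewrite /= Rmult_0_l.
by move=> e3; rewrite unfold_in star_zero // h.
Qed.

Theorem bounds n r (k lo hi : R) :
  (0 < #|[pred e : {set 'I_n} | edge r e]|)%N ->
  (forall e1 : {set 'I_n}, edge r e1 -> (0 < card_adm r [:: e1])%N /\
       k * INR (card_adm r [:: e1]) <= INR #|E1P r e1|) ->
  (forall (e1 e2 : {set 'I_n}) x, edge r e1 -> admissible r [:: e1] e2 -> e1 :&: e2 = [set x] ->
       lo <= INR (ScR r e1 e2) / INR (card_adm r [:: e1; e2]) <= hi) ->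
  0 <= lo -> 0 <= hi -> 0 <= k ->
  k * lo <= probA3 n r <= hi.
Proof.
move=> Npos hK hF lo0 hi0 k0.
set N := #|[pred e : {set 'I_n} | edge r e]|.
have NR : 0 < INR N by apply: lt_0_INR; apply/ltP.
rewrite /probA3 -/N.
split.
- apply: Rle_trans (_ : rsum (fun e1 : {set 'I_n} => edge r e1) (fun _ => k * lo / INR N) <= _).
    rewrite rsum_const (@eq_card _ _ [pred e | edge r e]) // -/N; apply: Req_le; field; lra.
  apply: rsum_le => e1 he1; have [A1pos hk] := hK e1 he1.
  set A1 := card_adm r [:: e1].
  have A1R : 0 < INR A1 by apply: lt_0_INR; apply/ltP.
  apply: Rle_trans (_ : rsum (admissible r [:: e1])
      (fun e2 => if #|e1 :&: e2| == 1%N then lo * (/ INR N * / INR A1) else 0) <= _).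
    rewrite rsum_ind (@eq_card _ _ (E1P r e1)) //.
    have pos : 0 <= lo * (/ INR N * / INR A1).
      apply: Rmult_le_pos => //; apply: Rmult_le_pos; left; apply: Rinv_0_lt_compat; lra.
    replace (k * lo / INR N) with ((k * INR A1) * (lo * (/ INR N * / INR A1))) by (field; lra).
    by apply: Rmult_le_compat_r.
  apply: rsum_le => e2 he2; rewrite inner_e2 //; case: ifP => h; last lra.
  have [x hx] := cards1P h.
  have [hlo _] := hF e1 e2 x he1 he2 hx.
  have pos : 0 <= / INR N * / INR A1.
    apply: Rmult_le_pos; left; apply: Rinv_0_lt_compat; lra.
  set A2 := INR (card_adm r [:: e1; e2]).
  replace (INR (ScR r e1 e2) * (/ INR N * / INR A1 * / A2)) with
     ((INR (ScR r e1 e2) / A2) * (/ INR N * / INR A1)) by (rewrite /Rdiv; ring).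
  by apply: Rmult_le_compat_r.
- apply: Rle_trans (_ : rsum (fun e1 : {set 'I_n} => edge r e1) (fun _ => hi / INR N) <= _); last first.
    rewrite rsum_const (@eq_card _ _ [pred e | edge r e]) // -/N; apply: Req_le; field; lra.
  apply: rsum_le => e1 he1; have [A1pos hk] := hK e1 he1.
  set A1 := card_adm r [:: e1].
  have A1R : 0 < INR A1 by apply: lt_0_INR; apply/ltP.
  have pos : 0 <= / INR N * / INR A1.
    apply: Rmult_le_pos; left; apply: Rinv_0_lt_compat; lra.
  apply: Rle_trans (_ : rsum (admissible r [:: e1])
      (fun e2 => if #|e1 :&: e2| == 1%N then hi * (/ INR N * / INR A1) else 0) <= _).
    apply: rsum_le => e2 he2; rewrite inner_e2 //; case: ifP => h; last lra.
    have [x hx] := cards1P h.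
    have [_ hhi] := hF e1 e2 x he1 he2 hx.
    set A2 := INR (card_adm r [:: e1; e2]).
    replace (INR (ScR r e1 e2) * (/ INR N * / INR A1 * / A2)) with
       ((INR (ScR r e1 e2) / A2) * (/ INR N * / INR A1)) by (rewrite /Rdiv; ring).
    by apply: Rmult_le_compat_r.
  rewrite rsum_ind (@eq_card _ _ (E1P r e1)) //.
  have EA : INR #|E1P r e1| <= INR A1.
    apply: le_INR; apply/leP; apply: subset_leq_card; apply/subsetP=> z; rewrite !inE /=.
    by case/andP.
  replace (hi / INR N) with ((INR A1) * (hi * (/ INR N * / INR A1))) by (field; lra).
  apply: Rmult_le_compat_r => //; apply: Rmult_le_pos => //.
Qed.

Open Scope nat_scope.
Lemma binF2 m i k : 'C(m, i.+1) <= 'C(m - k, i.+1) + k * 'C(m, i).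
Proof.
elim: k => [|k IH]; first by rewrite subn0 mul0n addn0.
apply: (leq_trans IH); rewrite mulSn addnCA addnA leq_add2r.
case: (posnP (m - k)) => [->|h]; first by rewrite bin0n.
have -> : m - k = (m - k.+1).+1 by lia.
rewrite binS addnC leq_add2r; apply: leq_bin2l; lia.
Qed.

Lemma binF1 m i : i.+1 * 'C(m, i.+1) = (m - i) * 'C(m, i).
Proof. exact: mul_bin_left. Qed.

Open Scope R_scope.
Lemma natRD (a b : nat) : INR (a + b)%N = INR a + INR b.
Proof. exact: plus_INR. Qed.
Lemma natRM (a b : nat) : INR (a * b)%N = INR a * INR b.
Proof. exact: mult_INR. Qed.
Lemma natRB (a b : nat) : (b <= a)%N -> INR (a - b)%N = INR a - INR b.
Proof. move=> h; rewrite -{2}(subnK h) natRD; ring. Qed.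
Lemma natRle (a b : nat) : (a <= b)%N -> INR a <= INR b.
Proof. by move=> h; apply: le_INR; apply/leP. Qed.

Lemma frac_le x y c d : 0 < y -> 0 < d -> x * d <= c * y -> x / y <= c / d.
Proof.
move=> hy hd h; apply: (Rmult_le_reg_r (y * d)); first nra.
replace (x / y * (y * d)) with (x * d) by (field; lra).
replace (c / d * (y * d)) with (c * y) by (field; lra).
exact: h.
Qed.

Lemma le_div x y d : 0 < d -> x * d <= y -> x <= y / d.
Proof.
move=> hd h; apply: (Rmult_le_reg_r d) => //.
by replace (y / d * d) with y by (field; lra).
Qed.

Section Num.
Variables (n r : nat).
Hypotheses (r2 : (2 <= r)%N) (good : (8 * (r * r) <= n)%N).

Let nR := INR n.
Let rR := INR r.
Let D := nR - rR.
Let B := INR 'C(n, r.-1).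
Let Cq := INR 'C(n, r - 2).

Lemma rn : (r <= n)%N. Proof. nia. Qed.
Lemma rR2 : 2 <= rR. Proof. by have := natRle r2; rewrite /rR. Qed.
Lemma nbig : 8 * (rR * rR) <= nR.
Proof. have := natRle good; rewrite natRM natRM /= /rR /nR. lra. Qed.
Lemma Dpos : 0 < D.
Proof. have := nbig; have := rR2; rewrite /D; nra. Qed.

Lemma Bpos : 0 < B.
Proof. apply: lt_0_INR; apply/ltP; rewrite bin_gt0; have := rn; lia. Qed.
Lemma Cq0 : 0 <= Cq.
Proof. exact: pos_INR. Qed.

Lemma Rr1 : INR r.-1 = rR - 1.
Proof. by rewrite -subn1 natRB /rR //=; lia. Qed.
Lemma Rr2 : INR (r - 2) = rR - 2.
Proof. by rewrite natRB /rR //=. Qed.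

Lemma Fq : Cq * (nR - rR + 2) = B * (rR - 1).
Proof.
have h := binF1 n (r - 2).
have e1 : (r - 2).+1 = r.-1 by lia.
rewrite e1 in h.
have := congr1 INR h; rewrite !natRM natRB; last by have := rn; lia.
rewrite Rr1 Rr2 /Cq /B /nR /rR => h'; lra.
Qed.

Lemma R2r1 : INR (2 * r).-1 = 2 * rR - 1.
Proof. by rewrite -subn1 natRB ?natRM /rR /=; [lra | lia]. Qed.

Lemma FS : B - (2 * rR - 1) * Cq <= INR 'C(n - (2 * r).-1, r.-1).
Proof.
have h := binF2 n (r - 2) (2 * r).-1.
have e1 : (r - 2).+1 = r.-1 by lia.
rewrite e1 in h.
have := natRle h; rewrite natRD natRM R2r1 /B /Cq; lra.
Qed.

Lemma FE : B - rR * Cq <= INR 'C(n - r, r.-1).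
Proof.
have h := binF2 n (r - 2) r.
have e1 : (r - 2).+1 = r.-1 by lia.
rewrite e1 in h.
have := natRle h; rewrite natRD natRM /B /Cq /rR; lra.
Qed.

Lemma FSup : INR 'C(n.-1, r.-1) <= B.
Proof. by apply: natRle; apply: leq_bin2l; apply: leq_pred. Qed.

Lemma FT : Cq * (1 - (2 * rR - 1) * rR / D) <= INR 'C(n - (2 * r).-1, r - 2).
Proof.
have Dp := Dpos; have r2R := rR2.
have hpos : 0 <= (2 * rR - 1) * rR / D.
  apply: Rmult_le_pos; [nra | left; apply: Rinv_0_lt_compat; lra].
case: (ltngtP r 2) => [|h3|e2]; first lia; last first.
  rewrite /Cq e2 subnn !bin0 /=; lra.
have e : (r - 2 = (r - 3).+1)%N by lia.
have h := binF2 n (r - 3) (2 * r).-1.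
have g := binF1 n (r - 3).
rewrite -e in h g.
set c3 := INR 'C(n, r - 3).
have g' : c3 * (nR - rR + 3) = (rR - 2) * Cq.
  have := congr1 INR g; rewrite !natRM Rr2 natRB; last by have := rn; lia.
  rewrite natRB; last lia.
  rewrite /c3 /Cq /nR /rR /= => h'; lra.
have c30 : 0 <= c3 by apply: pos_INR.
have c3le : c3 <= Cq * rR / D.
  apply: le_div => //; have := Cq0; rewrite /D; nra.
have := natRle h; rewrite natRD natRM R2r1 -/Cq -/c3 => hh.
have : (2 * rR - 1) * c3 <= (2 * rR - 1) * (Cq * rR / D).
  apply: Rmult_le_compat_l; [lra | done].
replace (Cq * (1 - (2 * rR - 1) * rR / D)) with (Cq - (2 * rR - 1) * (Cq * rR / D))
  by (field; lra).
lra.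
Qed.

Let dl := rR * rR / D.
Let w := rR / D.
Let a := (rR - 1) ^ 3 / nR.

Lemma nR16 : 16 * rR <= nR.
Proof. have := nbig; have := rR2; nra. Qed.

Lemma Dge : 15 * nR <= 16 * D.
Proof. have := nR16; rewrite /D; lra. Qed.

Lemma dl_bounds : 0 <= dl /\ dl <= 2 / 15 /\ 0 <= w /\ w <= dl /\ dl <= 16 / 15 * (rR * rR / nR).
Proof.
have Dp := Dpos; have r2R := rR2; have nb := nbig; have dg := Dge.
have np : 0 < nR by nra.
rewrite /dl /w; split; [|split; [|split; [|split]]].
- apply: Rmult_le_pos; [nra | left; apply: Rinv_0_lt_compat; lra].
- apply: (Rmult_le_reg_r D) => //; replace (rR * rR / D * D) with (rR * rR) by (field; lra); nra.
- apply: Rmult_le_pos; [lra | left; apply: Rinv_0_lt_compat; lra].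
- apply: Rmult_le_compat_r; [left; apply: Rinv_0_lt_compat; lra | nra].
- replace (16 / 15 * (rR * rR / nR)) with ((16 * (rR * rR)) / (15 * nR)) by (field; lra).
  apply: frac_le => //; nra.
Qed.

Lemma a_pos : 0 <= a.
Proof.
have r2R := rR2; have nb := nbig.
apply: Rmult_le_pos; [apply: pow_le; lra | left; apply: Rinv_0_lt_compat; nra].
Qed.

Lemma CqD : Cq * D <= B * (rR - 1).
Proof. have := Fq; have := Cq0; rewrite /D; nra. Qed.

Lemma X2 : (2 * rR - 1) * Cq <= 2 * dl * B.
Proof.
have Dp := Dpos; have r2R := rR2; have Bp := Bpos; have h := CqD.
replace (2 * dl * B) with (2 * rR * rR * B / D) by (rewrite /dl; field; lra).
apply: le_div => //.
have := Rmult_le_compat_l (2 * rR - 1) _ _ ltac:(lra) h; nra.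
Qed.

Lemma N1 : B * (1 - 2 * dl) <= INR 'C(n - (2 * r).-1, r.-1).
Proof. have := FS; have := X2; lra. Qed.

Lemma X1 : rR * Cq <= dl * B.
Proof.
have Dp := Dpos; have r2R := rR2; have Bp := Bpos; have h := CqD.
replace (dl * B) with (rR * rR * B / D) by (rewrite /dl; field; lra).
apply: le_div => //.
have := Rmult_le_compat_l rR _ _ ltac:(lra) h; nra.
Qed.

Lemma N2 : rR * B * (1 - dl) <= rR * INR 'C(n - r, r.-1).
Proof.
have r2R := rR2; have h := FE; have h2 := X1.
have h3 : B * (1 - dl) <= INR 'C(n - r, r.-1) by lra.
rewrite Rmult_assoc; apply: Rmult_le_compat_l => //; lra.
Qed.

Lemma N3 : rR * rR * Cq <= rR * B * dl.
Proof.
have r2R := rR2; have h := X1.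
have := Rmult_le_compat_l rR _ _ ltac:(lra) h; lra.
Qed.

Lemma a1w : a * (1 + w) = (rR - 1) ^ 3 / D.
Proof. have Dp := Dpos; have np : 0 < nR by (have := nR16; have := rR2; lra).
rewrite /a /w /D; field; rewrite /D in Dp; lra. Qed.

Lemma N4 : (rR - 1) ^ 2 * Cq <= a * (1 + w) * B.
Proof.
have Dp := Dpos; have r2R := rR2; have h := CqD.
rewrite a1w; replace ((rR - 1) ^ 3 / D * B) with ((rR - 1) ^ 2 * (B * (rR - 1)) / D) by (field; lra).
apply: le_div => //.
have p : 0 <= (rR - 1) ^ 2 by apply: pow_le; lra.
have := Rmult_le_compat_l _ _ _ p h; lra.
Qed.

Lemma N5 : a * (1 - 2 * dl) * B <= (rR - 1) ^ 2 * INR 'C(n - (2 * r).-1, r - 2).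
Proof.
have Dp := Dpos; have r2R := rR2; have Bp := Bpos; have hq := Fq; have c0 := Cq0.
have np : 0 < nR by (have := nR16; lra).
have [d0 [d1 _]] := dl_bounds.
have h := FT.
have f1 : (2 * rR - 1) * rR / D <= 2 * dl.
  rewrite /dl; replace (2 * (rR * rR / D)) with ((2 * rR * rR) / D) by (field; lra).
  apply: Rmult_le_compat_r; [left; apply: Rinv_0_lt_compat; lra | nra].
have f2 : Cq * (1 - 2 * dl) <= INR 'C(n - (2 * r).-1, r - 2).
  apply: Rle_trans h; apply: Rmult_le_compat_l => //; lra.
have f3 : a * B <= (rR - 1) ^ 2 * Cq.
  rewrite /a; replace ((rR - 1) ^ 3 / nR * B) with ((rR - 1) ^ 2 * (B * (rR - 1) / nR)) by (field; lra).
  apply: Rmult_le_compat_l; first by apply: pow_le; lra.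
  apply: (Rmult_le_reg_r nR) => //; replace (B * (rR - 1) / nR * nR) with (B * (rR - 1)) by (field; lra).
  rewrite -hq; apply: Rmult_le_compat_l => //; lra.
have p : 0 <= (rR - 1) ^ 2 by apply: pow_le; lra.
have := Rmult_le_compat_l _ _ _ p f2.
have := Rmult_le_compat_r (1 - 2 * dl) _ _ ltac:(lra) f3.
lra.
Qed.
End Num.

Lemma K_real E A1 X rB dl : A1 <= E + X -> X <= rB * dl -> rB * (1 - dl) <= E ->
  0 <= dl -> dl <= 2 / 15 -> 0 <= X -> 0 <= rB -> (1 - 2 * dl) * A1 <= E.
Proof.
intros h1 h2 h3 d0 d1 x0 r0.
assert (h4 : (1 - 2 * dl) * A1 <= (1 - 2 * dl) * (E + X)) by (apply Rmult_le_compat_l; lra).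
assert (h5 : rB <= 2 * E) by nra.
assert (h6 : rB * dl <= 2 * E * dl) by nra.
nra.
Qed.

Lemma F_real S A2 B T a dl w :
  0 < B -> B * (1 - 2 * dl) <= S -> S <= B -> S + T <= A2 -> a * (1 - 2 * dl) * B <= T ->
  A2 <= S + 2 * dl * B + a * (1 + w) * B -> 0 <= a -> 0 <= dl -> dl <= 2 / 15 -> 0 <= w ->
  (1 - 2 * dl) / (1 + a * (1 + w)) <= S / A2 <= 1 / (1 + a * (1 - 2 * dl)).
Proof.
intros Bp h1 h2 h3 h4 h5 a0 d0 d1 w0.
assert (Sp : 0 < S) by nra.
assert (c0 : 0 <= a * (1 - 2 * dl)) by nra.
assert (c1 : 0 <= a * (1 + w)) by nra.
assert (Tp : 0 <= T) by nra.
split; apply frac_le; try lra.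
- assert (k1 : (1 - 2 * dl) * S <= S) by nra.
  assert (k2 : (1 - 2 * dl) * (2 * dl * B) <= 2 * dl * S) by nra.
  assert (k3 : (1 - 2 * dl) * (a * (1 + w) * B) <= S * (a * (1 + w))) by nra.
  assert (k4 : (1 - 2 * dl) * A2 <= (1 - 2 * dl) * (S + 2 * dl * B + a * (1 + w) * B))
    by (apply Rmult_le_compat_l; lra).
  nra.
- assert (k1 : S * (a * (1 - 2 * dl)) <= B * (a * (1 - 2 * dl))) by nra.
  nra.
Qed.

Lemma Q_real P a dl w : 0 <= a -> 0 <= dl -> dl <= 2 / 15 -> 0 <= w -> w <= dl ->
  (1 - 2 * dl) * ((1 - 2 * dl) / (1 + a * (1 + w))) <= P -> P <= 1 / (1 + a * (1 - 2 * dl)) ->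
  1 - 5 * dl <= P * (1 + a) <= 1 + 4 * dl.
Proof.
intros a0 d0 d1 w0 w1 hl hu.
assert (c0 : 0 <= a * (1 - 2 * dl)) by nra.
assert (c1 : 0 <= a * (1 + w)) by nra.
split.
- apply Rle_trans with ((1 - 2 * dl) * ((1 - 2 * dl) / (1 + a * (1 + w))) * (1 + a));
    [| apply Rmult_le_compat_r; lra].
  replace ((1 - 2 * dl) * ((1 - 2 * dl) / (1 + a * (1 + w))) * (1 + a)) with
    ((1 - 2 * dl) * (1 - 2 * dl) * (1 + a) / (1 + a * (1 + w))) by (field; lra).
  apply (Rmult_le_reg_r (1 + a * (1 + w))); [lra|].
  replace ((1 - 2 * dl) * (1 - 2 * dl) * (1 + a) / (1 + a * (1 + w)) * (1 + a * (1 + w)))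
    with ((1 - 2 * dl) * (1 - 2 * dl) * (1 + a)) by (field; lra).
  assert (k : a * w <= a * dl) by nra.
  assert (k2 : (1 - 5 * dl) * (a * w) <= (1 - 5 * dl) * (a * dl)) by (apply Rmult_le_compat_l; lra).
  assert (k3 : 0 <= a * dl * dl) by (apply Rmult_le_pos; nra).
  assert (k4 : 0 <= dl * dl) by nra.
  nra.
- apply Rle_trans with (1 / (1 + a * (1 - 2 * dl)) * (1 + a)); [apply Rmult_le_compat_r; lra|].
  replace (1 / (1 + a * (1 - 2 * dl)) * (1 + a)) with ((1 + a) / (1 + a * (1 - 2 * dl))) by (field; lra).
  apply (Rmult_le_reg_r (1 + a * (1 - 2 * dl))); [lra|].
  replace ((1 + a) / (1 + a * (1 - 2 * dl)) * (1 + a * (1 - 2 * dl))) with (1 + a) by (field; lra).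
  assert (k5 : 0 <= a * dl) by nra.
  assert (k6 : a * dl * dl <= a * dl * (2 / 15)) by (apply Rmult_le_compat_l; lra).
  lra.
Qed.

Open Scope R_scope.
Definition dlt n r := INR r * INR r / (INR n - INR r).

Theorem main_bounds n r : (2 <= r)%N -> (8 * (r * r) <= n)%N ->
  1 - 5 * dlt n r <= probA3 n r * (1 + (INR r - 1) ^ 3 / INR n) <= 1 + 4 * dlt n r.
Proof.
move=> r2 good.
have rn : (r <= n)%N by nia.
have [d0 [d1 [w0 [w1 _]]]] := dl_bounds r2 good.
set B := INR 'C(n, r.-1).
set dl := INR r * INR r / (INR n - INR r).
set w := INR r / (INR n - INR r).
set a := (INR r - 1) ^ 3 / INR n.
have a0 : 0 <= a.
  apply: Rmult_le_pos; [apply: pow_le; have := natRle r2; rewrite /= => h; lra|].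
  left; apply: Rinv_0_lt_compat; apply: lt_0_INR; apply/ltP; nia.
have Bp : 0 < B by apply: lt_0_INR; apply/ltP; rewrite bin_gt0; lia.
have rR2 : 2 <= INR r by have := natRle r2.
rewrite /dlt -/dl; move: d0 d1 w0 w1; rewrite -/dl -/w => d0 d1 w0 w1.
have c1 : 0 <= a * (1 + w) by apply: Rmult_le_pos; lra.
have c2 : 0 <= a * (1 - 2 * dl) by apply: Rmult_le_pos; lra.
have [hlo hhi] : (1 - 2 * dl) * ((1 - 2 * dl) / (1 + a * (1 + w))) <= probA3 n r /\
                  probA3 n r <= 1 / (1 + a * (1 - 2 * dl)).
  apply: bounds.
  - rewrite (@eq_card _ _ [set A : {set 'I_n} | #|A| == r]); last by move=> A; rewrite !inE.
    by rewrite card_draws card_ord bin_gt0.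
  - move=> e1 he1; have c1e : #|e1| = r by apply/eqP.
    have kl := K_low r2 c1e; have ku := K_up c1e.
    have EA : (#|E1P r e1| <= card_adm r [:: e1])%N.
      by apply: subset_leq_card; apply/subsetP => z; rewrite !inE => /andP[].
    split.
      apply: leq_trans EA; apply: leq_trans kl; rewrite muln_gt0 bin_gt0; apply/andP; split; nia.
    have h1 := natRle ku; rewrite natRD !natRM in h1.
    have h2 := N3 r2 good; have h3 := N2 r2 good.
    have h4 := natRle kl; rewrite natRM in h4.
    have X0 : 0 <= INR r * INR r * INR 'C(n, r - 2).
      by apply: Rmult_le_pos; [nra | apply: pos_INR].
    apply: (K_real h1 h2) => //; [exact: Rle_trans h3 h4 | apply: Rmult_le_pos; apply: pos_INR].
  - move=> e1 e2 x he1 he2 hx.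
    have c1e : #|e1| = r by apply/eqP.
    have c2e : #|e2| = r by case/and3P: he2 => /eqP.
    have eS : ScR r e1 e2 = #|starP r e1 e2 x|.
      by apply: eq_card => e; rewrite unfold_in /= -(star_iff e r2 c1e c2e hx).
    have eA := A2_split r2 c1e c2e hx.
    rewrite /card_adm eA eS natRD.
    have rr1 : INR r.-1 = INR r - 1 by rewrite -subn1 natRB //=; lia.
    set S := INR #|starP r e1 e2 x|.
    set T := INR #|[predD [pred e | admissible r [:: e1; e2] e] & starP r e1 e2 x]|.
    have hs1 : B * (1 - 2 * dl) <= S.
      apply: Rle_trans (N1 r2 good) _; exact: natRle (S_low r2 c1e c2e hx).
    have hs2 : S <= B.
      apply: Rle_trans (FSup n r); exact: natRle (S_up r e1 e2 x).
    have hT : a * (1 - 2 * dl) * B <= T.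
      apply: Rle_trans (N5 r2 good) _.
      have t1 := natRle (T2_low r2 c1e c2e hx); rewrite !natRM rr1 in t1.
      rewrite /T; apply: Rle_trans t1; apply: Req_le; ring.
    have hX : T <= S + 2 * dl * B + a * (1 + w) * B - S.
      have x1 := natRle (X_up c1e c2e hx); rewrite natRD !natRM (R2r1 r2 good) rr1 in x1.
      have x2 := X2 r2 good; have x3 := N4 r2 good.
      rewrite /T /S /B /dl /a /w; move: x1 x2 x3; rewrite /= => x1 x2 x3; nra.
    apply: (F_real Bp hs1 hs2 (Rle_refl _) hT) => //; lra.
  - apply: Rmult_le_pos; [lra | left; apply: Rinv_0_lt_compat; lra].
  - apply: Rmult_le_pos; [lra | left; apply: Rinv_0_lt_compat; lra].
  - lra.
exact: Q_real hlo hhi.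
Qed.

Lemma a_nonneg (r n : nat) : (2 <= r)%N -> 0 <= (INR r - 1) ^ 3 / INR n.
Proof.
move=> r2; have h : 2 <= INR r by have := natRle r2; rewrite /=; lra.
case: n => [|n]; first by rewrite /= /Rdiv Rinv_0 Rmult_0_r; lra.
apply: Rmult_le_pos; [apply: pow_le; lra | left; apply: Rinv_0_lt_compat; apply: lt_0_INR; lia].
Qed.

Lemma small_eventually (r : nat -> nat) :
  Un_cv (fun n => INR (r n) / sqrt (INR n)) 0 ->
  forall eta, 0 < eta -> exists N, forall n, (N <= n)%N ->
    (1 <= n)%N /\ INR (r n) * INR (r n) / INR n < eta.
Proof.
move=> H eta he.
have [N0 hN0] := H (sqrt eta) (sqrt_lt_R0 _ he).
exists (maxn N0 1) => n hn; split; first by move: hn; rewrite geq_max => /andP[].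
have hn0 : (N0 <= n)%N by move: hn; rewrite geq_max => /andP[].
have := hN0 n (ssrnat.leP hn0); rewrite /R_dist Rminus_0_r.
have np : 0 < INR n by apply: lt_0_INR; move: hn; rewrite geq_max => /andP[_]; move/ltP.
have sp : 0 < sqrt (INR n) by apply: sqrt_lt_R0.
have t0 : 0 <= INR (r n) / sqrt (INR n).
  apply: Rmult_le_pos; [apply: pos_INR | left; apply: Rinv_0_lt_compat; lra].
rewrite Rabs_right; last lra.
move=> lt.
have : (INR (r n) / sqrt (INR n)) * (INR (r n) / sqrt (INR n)) < sqrt eta * sqrt eta.
  apply: Rmult_le_0_lt_compat => //.
rewrite sqrt_sqrt; last lra.
replace (INR (r n) / sqrt (INR n) * (INR (r n) / sqrt (INR n))) with
  (INR (r n) * INR (r n) / (sqrt (INR n) * sqrt (INR n))) by (field; lra).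
by rewrite sqrt_sqrt; last lra.
Qed.

Lemma Un_cv_ev (u v : nat -> R) l N : (forall n, (N <= n)%N -> u n = v n) -> Un_cv u l -> Un_cv v l.
Proof.
move=> h H e ep; have [M hM] := H e ep; exists (maxn M N) => n hn.
have /andP[h1 h2] : (M <= n)%N && (N <= n)%N by rewrite -geq_max; apply/leP.
by rewrite -h //; apply: hM; apply/leP.
Qed.

Lemma Un_cv_const k : Un_cv (fun _ => k) k.
Proof. by move=> e ep; exists 0%N => n _; rewrite /R_dist Rminus_diag Rabs_R0. Qed.

Lemma Un_cv_eql (u : nat -> R) l l' : Un_cv u l -> l = l' -> Un_cv u l'.
Proof. by move=> h <-. Qed.

Lemma cube_root_pos x : 0 < x -> 0 < Rpower x (1 / 3) /\ Rpower x (1 / 3) ^ 3 = x.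
Proof.
move=> xp; split; first by rewrite /Rpower; apply: exp_pos.
rewrite -(Rpower_pow 3); last by rewrite /Rpower; apply: exp_pos.
rewrite Rpower_mult /= ; replace (1 / 3 * (1 + 1 + 1)) with 1 by field.
by rewrite Rpower_1.
Qed.

Lemma v_cv : Un_cv (fun n => / Rpower (INR n) (1 / 3)) 0.
Proof.
move=> e ep.
have e3 : 0 < e ^ 3 by apply: pow_lt.
have [N hN] := INR_archimed 1 (/ e ^ 3) ltac:(lra).
exists N => n /leP hn.
have nR : / e ^ 3 < INR n.
  apply: Rlt_le_trans (_ : INR N <= _); first lra.
  exact: natRle.
have np : 0 < INR n by apply: Rle_lt_trans nR; left; apply: Rinv_0_lt_compat.
have [mp m3] := cube_root_pos np.
rewrite /R_dist Rminus_0_r Rabs_right; last by left; apply: Rinv_0_lt_compat.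
set m := Rpower (INR n) (1 / 3) in mp m3 *.
apply: Rnot_le_lt => le.
have : e ^ 3 <= (/ m) ^ 3 by apply: pow_incr; lra.
rewrite -Rinv_pow; last lra.
rewrite m3 => h.
have : / INR n < e ^ 3.
  rewrite -(Rinv_inv (e ^ 3)); apply: Rinv_lt_contravar => //.
  apply: Rmult_lt_0_compat => //; apply: Rinv_0_lt_compat => //.
lra.
Qed.

Lemma eps1_cv (r : nat -> nat) :
  (forall n : nat, (2 <= r n)%N) ->
  Un_cv (fun n => INR (r n) / sqrt (INR n)) 0 ->
  Un_cv (fun n => 1 - probA3 n (r n) * (1 + (INR (r n) - 1) ^ 3 / INR n)) 0.
Proof.
move=> H1 H2 e ep.
set eta := Rmin (1 / 9) (3 * e / 16).
have etap : 0 < eta by apply: Rmin_pos; lra.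
have [N hN] := small_eventually H2 etap.
exists N => n /leP hn.
have [n1 hs] := hN n hn.
have rr := H1 n.
have np : 0 < INR n by apply: lt_0_INR; apply/ltP.
have e1 : eta <= 1 / 9 by apply: Rmin_l.
have e2 : eta <= 3 * e / 16 by apply: Rmin_r.
have hs' : INR (r n) * INR (r n) < eta * INR n.
  have := Rmult_lt_compat_r (INR n) _ _ np hs.
  by replace (INR (r n) * INR (r n) / INR n * INR n) with (INR (r n) * INR (r n)) by (field; lra).
have good : (8 * ((r n) * (r n)) <= n)%N.
  apply/leP; apply: INR_le; rewrite !natRM.
  have : 0 <= INR (r n) * INR (r n) by apply: Rmult_le_pos; apply: pos_INR.
  rewrite /=; nra.
have [lo hi] := main_bounds rr good.
have [d0 [_ [_ [_ dlb]]]] := dl_bounds rr good.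
rewrite /R_dist Rminus_0_r; apply: Rabs_def1; rewrite /dlt in lo hi; lra.
Qed.

Unset Implicit Arguments.
Unset Strict Implicit.
Open Scope R_scope.

Theorem lemma2 (r : nat -> nat) :
  (forall n : nat, (2 <= r n)%N) ->
  Un_cv (fun n => INR (r n) / sqrt (INR n)) 0 ->
  (exists (eps1 eps2 : nat -> R),
      Un_cv eps1 0 /\ Un_cv eps2 0 /\
      exists N : nat, forall n : nat, (N <= n)%N ->
        probA3 n (r n) =
          (1 - eps1 n) / (1 + (INR (r n) - 1) ^ 3 / INR n * (1 + eps2 n)))
  /\
  (forall c : R, 0 <= c ->
     Un_cv (fun n => INR (r n) / Rpower (INR n) (1 / 3)) c ->
     Un_cv (fun n => probA3 n (r n)) (1 / (1 + c ^ 3))).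
Proof.
move=> H1 H2.
have E := eps1_cv H1 H2.
set eps1 := (fun n => 1 - probA3 n (r n) * (1 + (INR (r n) - 1) ^ 3 / INR n)) in E.
have Peq : forall n, probA3 n (r n) = (1 - eps1 n) / (1 + (INR (r n) - 1) ^ 3 / INR n).
  move=> n; have a0 := a_nonneg n (H1 n); rewrite /eps1.
  set A := (INR (r n) - 1) ^ 3 / INR n in a0 *; field; lra.
split.
  exists eps1, (fun _ => 0); split => //; split; first exact: Un_cv_const.
  by exists 0%N => n _; rewrite Rplus_0_r Rmult_1_r Peq.
move=> c c0 Hc.
set a := fun n => (INR (r n) - 1) ^ 3 / INR n.
have hw : Un_cv (fun n => (INR (r n) - 1) / Rpower (INR n) (1 / 3)) c.
  apply: (Un_cv_ext (fun n => INR (r n) / Rpower (INR n) (1 / 3) - / Rpower (INR n) (1 / 3))).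
    by move=> n; rewrite /Rdiv; ring.
  apply: Un_cv_eql (CV_minus _ _ _ _ Hc v_cv) _; ring.
have ha : Un_cv a (c ^ 3).
  apply: (@Un_cv_ev (fun n => ((INR (r n) - 1) / Rpower (INR n) (1 / 3)) ^ 3) _ _ 1%N).
    move=> n hn; have np : 0 < INR n by apply: lt_0_INR; apply/ltP.
    have [mp m3] := cube_root_pos np.
    rewrite /a; set m := Rpower (INR n) (1 / 3) in mp m3 *; rewrite -m3; field; lra.
  apply: (Un_cv_ext (fun n => (INR (r n) - 1) / Rpower (INR n) (1 / 3) *
      ((INR (r n) - 1) / Rpower (INR n) (1 / 3) * ((INR (r n) - 1) / Rpower (INR n) (1 / 3) * 1)))).
    by move=> n.
  apply: Un_cv_eql (CV_mult _ _ _ _ hw (CV_mult _ _ _ _ hw (CV_mult _ _ _ _ hw (Un_cv_const 1)))) _.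
  by rewrite /=.
have hg : Un_cv (fun n => (1 - eps1 n) * (1 + c ^ 3) - (1 + a n)) 0.
  apply: Un_cv_eql (CV_minus _ _ _ _ (CV_mult _ _ _ _ (CV_minus _ _ _ _ (Un_cv_const 1) E)
     (Un_cv_const (1 + c ^ 3))) (CV_plus _ _ _ _ (Un_cv_const 1) ha)) _; ring.
move=> e ep; have [N hN] := hg e ep.
exists (maxn N 1) => n hn.
have /andP[h1 h2] : (N <= n)%N && (1 <= n)%N by rewrite -geq_max; apply/leP.
have := hN n (ssrnat.leP h1); rewrite /R_dist Rminus_0_r => hlt.
have a0 : 0 <= a n by apply: a_nonneg.
have c3 : 0 <= c ^ 3 by apply: pow_le.
rewrite Peq -/(a n).
set g := (1 - eps1 n) * (1 + c ^ 3) - (1 + a n) in hlt.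
replace ((1 - eps1 n) / (1 + a n) - 1 / (1 + c ^ 3)) with (g / ((1 + a n) * (1 + c ^ 3)))
  by (rewrite /g; field; lra).
rewrite /Rdiv Rabs_mult Rabs_Rinv; last nra.
rewrite (Rabs_right ((1 + a n) * (1 + c ^ 3))); last nra.
apply: Rle_lt_trans hlt.
have hD : 1 <= (1 + a n) * (1 + c ^ 3) by nra.
have : / ((1 + a n) * (1 + c ^ 3)) <= 1.
  rewrite -Rinv_1; apply: Rinv_le_contravar; lra.
have := Rabs_pos g; move=> gp hi.
have := Rmult_le_compat_l _ _ _ gp hi; lra.
Qed.
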